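(* Let $\{(\mathcal{X}_j,\mathring{\mathcal{X}}_j,p_j)\}_{j\in\mathcal{I}}$ be $B$-$B$-bimodules with specified projections with reduced free product $(\mathcal{X},\mathring{\mathcal{X}},p)$ and let $i\in\mathcal{I}$. Then the map $\beta_i:\mathcal{L}(\mathcal{X}_i)\to\mathcal{L}(\mathcal{X})$, $\beta_i(a)=P_i\lambda_i(a)P_i$, is a homomorphism.
   Context: $B$ is a unital complex algebra. A $B$-$B$-bimodule with specified projection is a triple $(\mathcal{X},\mathring{\mathcal{X}},p)$ with $\mathcal{X}=B\oplus\mathring{\mathcal{X}}$ a direct sum of $B$-$B$-bimodules and $p(b\oplus\eta)=b$; $\mathcal{L}(\mathcal{X})$ is the algebra of linear operators on $\mathcal{X}$ respecting the bimodule structure. The reduced free product is $\mathcal{X}=B\oplus\mathring{\mathcal{X}}$ with $\mathring{\mathcal{X}}=\bigoplus_{n\ge1}\bigoplus_{i_1\ne\cdots\ne i_n}\mathring{\mathcal{X}}_{i_1}\otimes_B\cdots\otimes_B\mathring{\mathcal{X}}_{i_n}$ (consecutive indices distinct). For $i\in\mathcal{I}$, $\mathcal{X}(i)=B\oplus\bigoplus_{n\ge1}\bigoplus_{i_1\ne\cdots\ne i_n,\ i_1\ne i}\mathring{\mathcal{X}}_{i_1}\otimes_B\cdots\otimes_B\mathring{\mathcal{X}}_{i_n}$, $V_i:\mathcal{X}\to\mathcal{X}_i\otimes_B\mathcal{X}(i)$ is the natural bimodule isomorphism, $\lambda_i(a)=V_i^{-1}(a\otimes I)V_i$, and $P_i$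 is the projection of $\mathcal{X}$ onto the summand $B\oplus\mathring{\mathcal{X}}_i$, vanishing on the other direct summands. *)

(* Defs.v *)
From HB Require Import structures.
From mathcomp Require Import all_boot all_order all_algebra.
From mathcomp Require Import reals.
From mathcomp.real_closed Require Import complex.

Set Implicit Arguments.
Unset Strict Implicit.
Unset Printing Implicit Defensive.

Import GRing.Theory.
Local Open Scope ring_scope.

Section Bimodules.
Variable R : realType.
Local Notation C := (complex R).
Variable B : algType C.

Record bimod := Bimod {
  bm_car :> lmodType C;
  bm_l : B -> bm_car -> bm_car;
  bm_r : bm_car -> B -> bm_car;
  bm_lA : forall b b' x, bm_l (b * b') x = bm_l b (bm_l b' x);
  bm_l1 : forall x, bm_l 1 x = x;
  bm_lDl : forall b b' x, bm_l (b + b') x = bm_l b x + bm_l b' x;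
  bm_lDr : forall b x y, bm_l b (x + y) = bm_l b x + bm_l b y;
  bm_lZl : forall (c : C) b x, bm_l (c *: b) x = c *: bm_l b x;
  bm_lZr : forall (c : C) b x, bm_l b (c *: x) = c *: bm_l b x;
  bm_rA : forall x b b', bm_r x (b * b') = bm_r (bm_r x b) b';
  bm_r1 : forall x, bm_r x 1 = x;
  bm_rDl : forall x y b, bm_r (x + y) b = bm_r x b + bm_r y b;
  bm_rDr : forall x b b', bm_r x (b + b') = bm_r x b + bm_r x b';
  bm_rZl : forall (c : C) x b, bm_r (c *: x) b = c *: bm_r x b;
  bm_rZr : forall (c : C) x b, bm_r x (c *: b) = c *: bm_r x b;
  bm_lr : forall b x b', bm_l b (bm_r x b') = bm_r (bm_l b x) b'
}.

(* A bimodule with specified projection (X, Xo, p) is X = B (+) Xo, so it is *)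
(* given by the bimodule Xo; elements of X are pairs (b, xi), p = fst.       *)
Definition wp (M : bimod) : Type := (B * M)%type.

Definition wp_l (M : bimod) (b : B) (u : wp M) : wp M := (b * u.1, bm_l b u.2).
Definition wp_r (M : bimod) (u : wp M) (b : B) : wp M := (u.1 * b, bm_r u.2 b).
Definition wp_add (M : bimod) (u v : wp M) : wp M := (u.1 + v.1, u.2 + v.2).
Definition wp_scale (M : bimod) (c : C) (u : wp M) : wp M := (c *: u.1, c *: u.2).
Definition wp_zero (M : bimod) : wp M := (0, 0).
Definition wp_one (M : bimod) : wp M := (1, 0).

Definition isL (M : bimod) (T : wp M -> wp M) : Prop :=
  [/\ forall u v, T (wp_add u v) = wp_add (T u) (T v),
      forall c u, T (wp_scale c u) = wp_scale c (T u),
      forall b u, T (wp_l b u) = wp_l b (T u) &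
      forall b u, T (wp_r u b) = wp_r (T u) b].

End Bimodules.

(* An element of Xo = (+)_{i1 <> ... <> in} Xo_i1 (x)_B ... (x)_B Xo_in is    *)
(* represented by a finite formal sum (fsum) of pure tensors; a pure tensor   *)
(* xi_1 (x) ... (x) xi_n is represented by the word (list of letters)          *)
(* [:: (i1, xi_1); ...; (in, xi_n)].  An element of X = B (+) Xo is a pair    *)
(* (b, s).  The quotient is taken in setoid style: fp_rel is the congruence   *)
(* generated by the defining relations of the algebraic tensor product over B *)
(* (additivity in each slot, balancing x b (x) y = x (x) b y), together with  *)
(* killing the words that are not admissible (empty, or with two consecutive *)
(* equal indices, or - for X(i) - starting with the index i).  Since all the  *)
(* tensor relations preserve the index pattern of a word, the quotient is     *)
(* exactly the direct sum over admissible words of the tensor products.       *)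

Section FreeProduct.
Variable R : realType.
Local Notation C := (complex R).
Variable B : algType C.
Variable I : eqType.
Variable Xo : I -> bimod B.

Definition letter := {j : I & Xo j}.
Definition mkl (j : I) (x : Xo j) : letter := existT (fun k => Xo k : Type) j x.
Definition word := seq letter.
Definition fsum := seq word.

Definition map_first (f : forall j, Xo j -> Xo j) (w : word) : word :=
  match w with
  | [::] => [::]
  | l :: r => mkl (f (projT1 l) (projT2 l)) :: r
  end.

Fixpoint ract_last (w : word) (b : B) : word :=
  match w with
  | [::] => [::]
  | [:: l] => [:: mkl (bm_r (projT2 l) b)]
  | l :: r => l :: ract_last r b
  end.

Inductive fp_rel (kill : pred I) : fsum -> fsum -> Prop :=
| fr_refl s : fp_rel kill s s
| fr_sym s t : fp_rel kill s t -> fp_rel kill t s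
| fr_trans s t u : fp_rel kill s t -> fp_rel kill t u -> fp_rel kill s u
| fr_cat s s' t t' :
    fp_rel kill s s' -> fp_rel kill t t' -> fp_rel kill (s ++ t) (s' ++ t')
| fr_comm s t : fp_rel kill (s ++ t) (t ++ s)
| fr_add (u v : word) (j : I) (x y : Xo j) :
    fp_rel kill [:: u ++ mkl (x + y) :: v]
                [:: u ++ mkl x :: v; u ++ mkl y :: v]
| fr_zero (u v : word) (j : I) :
    fp_rel kill [:: u ++ mkl (0 : Xo j) :: v] [::]
| fr_bal (u v : word) (j k : I) (x : Xo j) (y : Xo k) (b : B) :
    fp_rel kill [:: u ++ mkl (bm_r x b) :: mkl y :: v]
                [:: u ++ mkl x :: mkl (bm_l b y) :: v]
| fr_nil : fp_rel kill [:: [::]] [::]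
| fr_rep (u v : word) (j : I) (x y : Xo j) :
    fp_rel kill [:: u ++ mkl x :: mkl y :: v] [::]
| fr_kill (v : word) (j : I) (x : Xo j) :
    kill j -> fp_rel kill [:: mkl x :: v] [::].

Definition Xrep := (B * fsum)%type.

(* equality in X(kill): kill = pred0 gives X, kill = pred1 i gives X(i) *)
Definition Xeqv (kill : pred I) (u v : Xrep) : Prop :=
  u.1 = v.1 /\ fp_rel kill u.2 v.2.

Definition Xeq := Xeqv pred0.

Definition Xzero : Xrep := (0, [::]).
Definition Xadd (u v : Xrep) : Xrep := (u.1 + v.1, u.2 ++ v.2).
Definition Xscale (c : C) (u : Xrep) : Xrep :=
  (c *: u.1, map (map_first (fun j x => c *: x)) u.2).
Definition Xl (b : B) (u : Xrep) : Xrep :=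
  (b * u.1, map (map_first (fun j x => bm_l b x)) u.2).
Definition Xr (u : Xrep) (b : B) : Xrep :=
  (u.1 * b, map (fun w => ract_last w b) u.2).

Definition isLX (T : Xrep -> Xrep) : Prop :=
  [/\ forall u v, Xeq u v -> Xeq (T u) (T v),
      forall u v, Xeq (T (Xadd u v)) (Xadd (T u) (T v)),
      forall c u, Xeq (T (Xscale c u)) (Xscale c (T u)),
      forall b u, Xeq (T (Xl b u)) (Xl b (T u)) &
      forall b u, Xeq (T (Xr u b)) (Xr (T u) b)].

Variable i : I.

(* X_i (x)_B X(i): formal sums of pure tensors xi (x) eta, xi in X_i, eta a  *)
(* representative of an element of X(i).                                     *)
Definition Trep := seq (wp (Xo i) * Xrep)%type.

Definition letter_i (l : letter) : Xo i := tagged_as (mkl (0 : Xo i)) l.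

(* the natural isomorphism V_i : X -> X_i (x)_B X(i) *)
Definition V_word (w : word) : Trep :=
  match w with
  | [::] => [::]
  | l :: r =>
      if projT1 l == i then
        [:: ((0, letter_i l), if r is [::] then ((1 : B), [::]) else (0, [:: r]))]
      else [:: (wp_one (Xo i), (0, [:: w]))]
  end.

Definition V (u : Xrep) : Trep :=
  (wp_one (Xo i), (u.1, [::])) :: flatten (map V_word u.2).

(* its inverse V_i^{-1} : X_i (x)_B X(i) -> X,                               *)
(*   (c, x) (x) (b, s)  |->  c.(b, s) + x b + sum_{w in s} x (x) w            *)
Definition Vinv1 (t : wp (Xo i) * Xrep) : Xrep :=
  Xadd (Xl t.1.1 t.2)
       (0, [:: mkl (bm_r t.1.2 t.2.1)] :: map (cons (mkl t.1.2)) t.2.2).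

Definition Vinv (t : Trep) : Xrep := foldr Xadd Xzero (map Vinv1 t).

Definition tensI (a : wp (Xo i) -> wp (Xo i)) (t : Trep) : Trep :=
  map (fun p => (a p.1, p.2)) t.

Definition lambda (a : wp (Xo i) -> wp (Xo i)) (u : Xrep) : Xrep :=
  Vinv (tensI a (V u)).

Definition single_i (w : word) : bool :=
  if w is [:: l] then projT1 l == i else false.

Definition Pi (u : Xrep) : Xrep := (u.1, filter single_i u.2).

Definition beta (a : wp (Xo i) -> wp (Xo i)) (u : Xrep) : Xrep :=
  Pi (lambda a (Pi u)).

End FreeProduct.

Arguments beta {R B I Xo} i a u.
Arguments lambda {R B I Xo} i a u.
Arguments Pi {R B I Xo} i u.
Arguments V {R B I Xo} i u.
Arguments Vinv {R B I Xo} i t.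

(* Main.v *)
Require Import Defs.
From HB Require Import structures.
From mathcomp Require Import all_boot all_order all_algebra.
From mathcomp Require Import reals.
From mathcomp.real_closed Require Import complex.
Set Implicit Arguments.
Unset Strict Implicit.
Import GRing.Theory.
Local Open Scope ring_scope.

Section Aux.
Variable R : realType.
Variable B : algType (complex R).
Variable I : eqType.
Variable Xo : I -> bimod B.
Variable i : I.

Lemma letter_mkl (x : Xo i) : letter_i i (mkl x) = x.
Proof. rewrite /letter_i /mkl /tagged_as /=. case: eqP => // e. by rewrite [e]eq_axiomK. Qed.

Definition lw (w : word Xo) : Xo i := if w is l :: _ then letter_i i l else 0.
Definition ff (s : fsum Xo) : Xo i := \sum_(w <- s | single_i i w) lw w.
Definition pr (u : Xrep Xo) : wp (Xo i) := (u.1, ff u.2).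

Lemma single_cat (u v : word Xo) (l : letter Xo) :
  single_i i (u ++ l :: v) = nilp u && nilp v && (projT1 l == i).
Proof. by case: u => [|a [|b u]]; case: v => [|c v]. Qed.

Lemma ff_cons w s : ff (w :: s) = (if single_i i w then lw w else 0) + ff s.
Proof. by rewrite /ff big_cons; case: ifP => _; rewrite ?add0r. Qed.

Lemma ff_nil : ff [::] = 0.
Proof. by rewrite /ff big_nil. Qed.

Lemma ff_cat s t : ff (s ++ t) = ff s + ff t.
Proof. by rewrite /ff big_cat. Qed.

Lemma ff_single (y : Xo i) : ff [:: [:: mkl y]] = y.
Proof. by rewrite ff_cons ff_nil /= eqxx letter_mkl addr0. Qed.

Lemma ff_rel s t : fp_rel pred0 s t -> ff s = ff t.
Proof.
elim=> {s t}.
- by [].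
- by move=> s t _ ->.
- by move=> s t u _ -> _ ->.
- by move=> s s' t t' _ E1 _ E2; rewrite !ff_cat E1 E2.
- by move=> s t; rewrite !ff_cat addrC.
- move=> u v j x y; rewrite !ff_cons ff_nil !single_cat.
  case: u => [|a u] /=; last by rewrite !addr0.
  case: v => [|c v] /=; last by rewrite !addr0.
  case: eqP => [e|]; last by rewrite !addr0.
  by subst j; rewrite !letter_mkl !addr0.
- move=> u v j; rewrite !ff_cons ff_nil !single_cat.
  case: u => [|a u] /=; last by rewrite !addr0.
  case: v => [|c v] /=; last by rewrite !addr0.
  case: eqP => [e|]; last by rewrite !addr0.
  by subst j; rewrite letter_mkl addr0.
- by move=> u v j k x y b; rewrite !ff_cons ff_nil !single_cat /= andbF.
- by rewrite ff_cons ff_nil /= addr0.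
- by move=> u v j x y; rewrite !ff_cons ff_nil !single_cat /nilp /= andbF /= addr0.
- by move=> v j x /=.
Qed.

Lemma zself (V : zmodType) (x : V) : x = x + x -> x = 0.
Proof. by move=> H; apply: (addrI x); rewrite addr0 -H. Qed.

Lemma bm_r0 (M : bimod B) b : bm_r (0 : M) b = 0.
Proof. by apply: zself; rewrite -bm_rDl addr0. Qed.

Lemma bm_l0 (M : bimod B) b : bm_l b (0 : M) = 0.
Proof. by apply: zself; rewrite -bm_lDr addr0. Qed.

Lemma rel_single (s : fsum Xo) : all (single_i i) s -> fp_rel pred0 s [:: [:: mkl (ff s)]].
Proof.
elim: s => [|w s IH] /=.
  by move=> _; rewrite ff_nil; apply: fr_sym; exact: (fr_zero _ [::] [::] i).
case/andP; case: w => [|[j x] [|? ?]] //= /eqP e hs; subst j.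
rewrite ff_cons /= eqxx letter_mkl.
apply: fr_trans (fr_cat (fr_refl _ [:: [:: mkl x]]) (IH hs)) _.
apply: fr_sym; exact: (fr_add _ [::] [::] x (ff s)).
Qed.

Lemma Xeq_pr (u v : Xrep Xo) : all (single_i i) u.2 -> all (single_i i) v.2 ->
  pr u = pr v -> Xeq u v.
Proof.
move=> hu hv [e1 e2]; split => //.
apply: fr_trans (rel_single hu) _; rewrite e2; apply: fr_sym; exact: rel_single.
Qed.

Lemma single_map_first (g : forall j, Xo j -> Xo j) (w : word Xo) : single_i i (map_first g w) = single_i i w.
Proof. by case: w => [|l [|? ?]]. Qed.

Lemma single_ract (w : word Xo) b : single_i i (ract_last w b) = single_i i w.
Proof. by case: w => [|l [|l' [|? ?]]]. Qed.

Lemma ff_map_first (g : forall j, Xo j -> Xo j) (s : fsum Xo) :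
  g i 0 = 0 -> (forall x y, g i (x + y) = g i x + g i y) ->
  ff (map (map_first g) s) = g i (ff s).
Proof.
move=> g0 gD; elim: s => [|w s IH] /=; first by rewrite !ff_nil g0.
rewrite !ff_cons IH gD single_map_first; congr (_ + _).
case: w => [|[j x] [|? ?]] //=; try by rewrite g0.
by case: eqP => [e|]; [subst j; rewrite !letter_mkl | rewrite g0].
Qed.

Lemma ff_ract (s : fsum Xo) (b : B) : ff (map (fun w => ract_last w b) s) = bm_r (ff s) b.
Proof.
elim: s => [|w s IH] /=; first by rewrite !ff_nil bm_r0.
rewrite !ff_cons IH bm_rDl single_ract; congr (_ + _).
case: w => [|[j x] [|l' [|? ?]]] //=; try by rewrite bm_r0.
by case: eqP => [e|]; [subst j; rewrite !letter_mkl | rewrite bm_r0].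
Qed.

Lemma pr_Xadd (u v : Xrep Xo) : pr (Xadd u v) = wp_add (pr u) (pr v).
Proof. by rewrite /pr /= ff_cat. Qed.

Lemma pr_Xscale c (u : Xrep Xo) : pr (Xscale c u) = wp_scale c (pr u).
Proof. by rewrite /pr /= ff_map_first ?scaler0 // => x y; rewrite scalerDr. Qed.

Lemma pr_Xl b (u : Xrep Xo) : pr (Xl b u) = wp_l b (pr u).
Proof. by rewrite /pr /= ff_map_first ?bm_l0 // => x y; rewrite bm_lDr. Qed.

Lemma pr_Xr (u : Xrep Xo) b : pr (Xr u b) = wp_r (pr u) b.
Proof. by rewrite /pr /= ff_ract. Qed.

Lemma ff_filter (s : fsum Xo) : ff (filter (single_i i) s) = ff s.
Proof.
elim: s => [|w s IH] //=; case: ifP => h; rewrite !ff_cons ?h IH //.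
by rewrite add0r.
Qed.

Lemma pr_Pi (u : Xrep Xo) : pr (Pi i u) = pr u.
Proof. by rewrite /pr /Pi /= ff_filter. Qed.

Lemma all_Pi (u : Xrep Xo) : all (single_i i) (Pi i u).2.
Proof. exact: filter_all. Qed.

Lemma pr_Vinv1 p b : pr (Vinv1 (i:=i) (p, (b, [::]))) = wp_r p b.
Proof. by rewrite /pr /Vinv1 /= ff_single addr0. Qed.

Section A.
Variable a : wp (Xo i) -> wp (Xo i).
Hypothesis HD : forall u v, a (wp_add u v) = wp_add (a u) (a v).
Hypothesis HR : forall b u, a (wp_r u b) = wp_r (a u) b.

Lemma a0 : a (0, 0) = (0, 0).
Proof.
have := HD (0, 0) (0, 0); rewrite /wp_add /= !addr0.
case: (a (0, 0)) => b x [eb ex].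
by rewrite (zself eb) (zself ex).
Qed.

Lemma Vinv_cons p (t : Trep Xo i) : Vinv i (tensI a (p :: t)) = Xadd (Vinv1 (a p.1, p.2)) (Vinv i (tensI a t)).
Proof. by []. Qed.

Lemma body (s : fsum Xo) : all (single_i i) s ->
  pr (Vinv i (tensI a (flatten (map (V_word i) s)))) = a (0, ff s).
Proof.
elim: s => [|w s IH] /=.
  by move=> _; rewrite /pr /= ff_nil; exact: (esym a0).
case/andP; case: w => [|[j x] [|? ?]] //= /eqP e hs; subst j.
rewrite eqxx /=.
have E : forall p t, Vinv i (p :: t) = Xadd (Vinv1 p) (Vinv i t) by [].
rewrite E pr_Xadd pr_Vinv1 IH // ff_cons /= eqxx.
have -> : letter_i i (existT (fun j => Xo j) i x) = x := letter_mkl x.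
rewrite -HR -HD; congr a.
by rewrite /wp_r /wp_add /= mul0r addr0 bm_r1.
Qed.

Lemma pr_beta (u : Xrep Xo) : pr (beta i a u) = a (pr u).
Proof.
rewrite /beta pr_Pi /lambda /V Vinv_cons pr_Xadd pr_Vinv1 body ?all_Pi //.
rewrite -HR -HD /wp_r /wp_add /= mul1r bm_r0 addr0 add0r.
by rewrite ff_filter.
Qed.

End A.

Lemma all_Xadd (u v : Xrep Xo) : all (single_i i) u.2 -> all (single_i i) v.2 -> all (single_i i) (Xadd u v).2.
Proof. by move=> h1 h2; rewrite /= all_cat h1 h2. Qed.

Lemma all_Xscale c (u : Xrep Xo) : all (single_i i) u.2 -> all (single_i i) (Xscale c u).2.
Proof. case: u => b s /=; elim: s => //= w s IH /andP[h1 h2]; by rewrite single_map_first h1 IH. Qed.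

Lemma all_Xl c (u : Xrep Xo) : all (single_i i) u.2 -> all (single_i i) (Xl c u).2.
Proof. case: u => b s /=; elim: s => //= w s IH /andP[h1 h2]; by rewrite single_map_first h1 IH. Qed.

Lemma all_Xr c (u : Xrep Xo) : all (single_i i) u.2 -> all (single_i i) (Xr u c).2.
Proof. case: u => b s /=; elim: s => //= w s IH /andP[h1 h2]; by rewrite single_ract h1 IH. Qed.
End Aux.

Theorem corollary2p3 (R : realType) (B : algType (complex R)) (I : eqType)
    (Xo : I -> bimod B) (i : I) :
  forall a a' : wp (Xo i) -> wp (Xo i), isL a -> isL a' ->
    [/\ isLX (beta i a),
        forall u, Xeq (beta i (fun v => a (a' v)) u) (beta i a (beta i a' u)),
        forall u, Xeq (beta i (fun v => wp_add (a v) (a' v)) u)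
                      (Xadd (beta i a u) (beta i a' u)) &
        forall (c : complex R) u,
          Xeq (beta i (fun v => wp_scale c (a v)) u) (Xscale c (beta i a u))].
Proof.
move=> a a' [aD aZ aL aR] [a'D a'Z a'L a'R].
split.
- split.
  + move=> u v [e1 e2]; apply: (Xeq_pr (i:=i)); [exact: all_Pi | exact: all_Pi |].
    by rewrite !(pr_beta aD aR) /pr e1 (ff_rel i e2).
  + move=> u v; apply: (Xeq_pr (i:=i)); [exact: all_Pi | apply: all_Xadd; exact: all_Pi |].
    by rewrite pr_Xadd !(pr_beta aD aR) pr_Xadd aD.
  + move=> c u; apply: (Xeq_pr (i:=i)); [exact: all_Pi | apply: all_Xscale; exact: all_Pi |].
    by rewrite pr_Xscale !(pr_beta aD aR) pr_Xscale aZ.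
  + move=> b u; apply: (Xeq_pr (i:=i)); [exact: all_Pi | apply: all_Xl; exact: all_Pi |].
    by rewrite pr_Xl !(pr_beta aD aR) pr_Xl aL.
  + move=> b u; apply: (Xeq_pr (i:=i)); [exact: all_Pi | apply: all_Xr; exact: all_Pi |].
    by rewrite pr_Xr !(pr_beta aD aR) pr_Xr aR.
- move=> u; apply: (Xeq_pr (i:=i)); [exact: all_Pi | exact: all_Pi |].
  have HD : forall u v, a (a' (wp_add u v)) = wp_add (a (a' u)) (a (a' v)).
    by move=> ? ?; rewrite a'D aD.
  have HR : forall b u, a (a' (wp_r u b)) = wp_r (a (a' u)) b.
    by move=> ? ?; rewrite a'R aR.
  by rewrite (pr_beta HD HR) !(pr_beta aD aR) (pr_beta a'D a'R).
- move=> u; apply: (Xeq_pr (i:=i)); [exact: all_Pi | apply: all_Xadd; exact: all_Pi |].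
  have HD : forall u v, wp_add (a (wp_add u v)) (a' (wp_add u v)) =
     wp_add (wp_add (a u) (a' u)) (wp_add (a v) (a' v)).
    move=> u1 v1; rewrite aD a'D /wp_add; case: (a u1) (a v1) (a' u1) (a' v1) => [? ?] [? ?] [? ?] [? ?] /=.
    by congr pair; apply: addrACA.
  have HR : forall b u, wp_add (a (wp_r u b)) (a' (wp_r u b)) = wp_r (wp_add (a u) (a' u)) b.
    move=> b1 u1; rewrite aR a'R /wp_r /wp_add; case: (a u1) (a' u1) => [? ?] [? ?] /=.
    by congr pair; [exact: (esym (mulrDl _ _ _)) | exact: (esym (bm_rDl _ _ _))].
  by rewrite (pr_beta HD HR) pr_Xadd (pr_beta aD aR) (pr_beta a'D a'R).
- move=> c u; apply: (Xeq_pr (i:=i)); [exact: all_Pi | apply: all_Xscale; exact: all_Pi |].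
  have HD : forall u v, wp_scale c (a (wp_add u v)) =
     wp_add (wp_scale c (a u)) (wp_scale c (a v)).
    move=> u1 v1; rewrite aD /wp_add /wp_scale; case: (a u1) (a v1) => [? ?] [? ?] /=.
    by congr pair; apply: scalerDr.
  have HR : forall b u, wp_scale c (a (wp_r u b)) = wp_r (wp_scale c (a u)) b.
    move=> b1 u1; rewrite aR /wp_r /wp_scale; case: (a u1) => [? ?] /=.
    by congr pair; [exact: scalerAl | exact: (esym (bm_rZl _ _ _))].
  by rewrite (pr_beta HD HR) pr_Xscale (pr_beta aD aR).
Qed.
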